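(* Let $n$ and $m$ be integers with $n\geq 2$ and $1\leq m\leq\binom{n}{2}$. A two-terminal graph $G\in T_{n,m}$ is a $1$-uniformly most reliable two-terminal graph ($1$-UMRTTG) if and only if the edge $st$ joining its terminals belongs to $G$.
   Context: All graphs are finite, simple and undirected. A two-terminal graph is a graph $G$ together with two distinguished vertices $s,t$ (the terminals). Two two-terminal graphs are isomorphic if there is a graph isomorphism between them mapping the set of terminals onto the set of terminals. $T_{n,m}$ denotes the set of all pairwise nonisomorphic two-terminal graphs with $n$ vertices and $m$ edges. For a positive integer $d$, a $d$-pathset of a two-terminal graph $G$ is a spanning subgraph of $G$ containing a path of length (number of edges) at most $d$ joining $s$ and $t$. For $\rho\in[0,1]$, $R_G^d(\rho)$ is the probability that the random spanning subgraph obtained from $G$ by deleting each edge independently with probability $\rho$ is a $d$-pathset. A graph $G\in T_{n,m}$ is a $d$-UMRTTG if $R_G^d(\rho)\geq R_H^d(\rho)$ for every $H\in T_{n,m}$ and every $\rho\in[0,1]$. *)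

(* Defs.v *)
From HB Require Import structures.
From mathcomp Require Import all_boot all_order all_algebra.
From mathcomp Require Import boolp reals.
Set Implicit Arguments. Unset Strict Implicit. Unset Printing Implicit Defensive.
Import Order.TTheory GRing.Theory Num.Theory.

Definition simple_edges (n : nat) (E : {set {set 'I_n}}) : bool :=
  [forall e in E, #|e| == 2].

Definition two_terminal (n m : nat) (E : {set {set 'I_n}}) (s t : 'I_n) : bool :=
  [&& simple_edges E, #|E| == m & s != t].

(* p is a path (distinct vertices) from s to t in the graph with edge set F,
   given as the list of vertices after s; its length is size p. *)
Definition is_st_path (n : nat) (F : {set {set 'I_n}}) (s t : 'I_n)
    (p : seq 'I_n) : bool :=
  [&& path (fun x y => [set x; y] \in F) s p, last s p == t & uniq (s :: p)].

Definition d_pathset (n d : nat) (F : {set {set 'I_n}}) (s t : 'I_n) : Prop :=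
  exists p : seq 'I_n, is_st_path F s t p && (size p <= d)%N.

Local Open Scope ring_scope.

(* R^d_G(rho): each edge deleted independently with probability rho *)
Definition reliability (R : realType) (n d : nat) (E : {set {set 'I_n}})
    (s t : 'I_n) (rho : R) : R :=
  \sum_(F in powerset E | `[< d_pathset d F s t >])
     (1 - rho) ^+ #|F| * rho ^+ (#|E| - #|F|).

Definition d_UMRTTG (R : realType) (n m d : nat) (E : {set {set 'I_n}})
    (s t : 'I_n) : Prop :=
  two_terminal m E s t /\
  forall (E' : {set {set 'I_n}}) (s' t' : 'I_n), two_terminal m E' s' t' ->
  forall rho : R, 0 <= rho <= 1 ->
    reliability d E' s' t' rho <= reliability d E s t rho.

(* Main.v *)
Require Import Defs.
From HB Require Import structures.
From mathcomp Require Import all_boot all_order all_algebra.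
From mathcomp Require Import boolp reals.
From mathcomp Require Import zify.
Import Order.TTheory GRing.Theory Num.Theory.
Local Open Scope ring_scope.

Lemma binom_sets (R : comNzRingType) (T : finType) (A : {set T}) (x y : R) :
  \sum_(F in powerset A) x ^+ #|F| * y ^+ (#|A| - #|F|) = (x + y) ^+ #|A|.
Proof.
rewrite -prodr_const [RHS]big_mkcond /=.
pose f := fun i => if i \in A then x else 0.
pose g := fun i => if i \in A then y else 1.
rewrite [RHS](eq_bigr (fun i => f i + g i)); last first.
  by move=> i _; rewrite /f /g; case: (i \in A); rewrite ?add0r.
rewrite bigA_distr /=.
rewrite big_mkcond /=; apply: eq_bigr => J _; symmetry.
rewrite powersetE.
case: (boolP (J \subset A)) => JA; last first.
  have /subsetPn [i iJ iA] := JA.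
  by rewrite (bigD1 i) //= iJ /f (negbTE iA) mul0r.
rewrite (bigID (fun i => i \in J)) /=.
rewrite (eq_bigr (fun _ => x)); last first.
  by move=> i iJ; rewrite iJ /f (subsetP JA i iJ).
rewrite prodr_const.
rewrite (eq_bigr g); last by move=> i /negbTE ->.
rewrite /g -big_mkcondr /= prodr_const.
congr (_ * _ ^+ _).
rewrite -{2}(setIidPr JA) -(cardsD A J).
by apply: eq_card => i; rewrite !inE.
Qed.

Lemma path1P n (F : {set {set 'I_n}}) (s t : 'I_n) : s != t ->
  d_pathset 1 F s t <-> [set s; t] \in F.
Proof.
move=> st; split.
  case=> [[|x [|y p]]] /=; rewrite /is_st_path /=.
  - by rewrite (negbTE st).
  - by case/andP=> /and3P [/andP [H _] /eqP <- _].
  - by rewrite andbF.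
move=> H; exists [:: t]; rewrite /is_st_path /= H eqxx inE st.
by [].
Qed.

Lemma rel_val (R : realType) n (E : {set {set 'I_n}}) (s t : 'I_n) (rho : R) :
  s != t ->
  reliability 1 E s t rho = if [set s; t] \in E then 1 - rho else 0.
Proof.
move=> st; rewrite /reliability.
under eq_bigl => F do rewrite (asbool_equiv_eq (@path1P _ F s t st)).
set e := [set s; t].
case: ifP => eE; last first.
  apply: big1 => F /andP [FE /asboolP eF].
  by move: FE; rewrite powersetE => /subsetP /(_ _ eF); rewrite eE.
have := @binom_sets R _ E (1 - rho) rho.
rewrite subrK expr1n (bigID (fun F : {set {set 'I_n}} => `[< e \in F >])) /=.
have -> : \sum_(i in powerset E | ~~ `[< e \in i >])
     (1 - rho) ^+ #|i| * rho ^+ (#|E| - #|i|) = rho.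
  rewrite (eq_bigl (fun F : {set {set 'I_n}} => F \in powerset (E :\ e))); last first.
    by move=> F; rewrite !powersetE subsetD1 asboolb.
  rewrite (eq_bigr (fun F : {set {set 'I_n}} => rho * ((1-rho)^+#|F| * rho^+(#|E :\ e| - #|F|)))).
    by rewrite -big_distrr /= binom_sets subrK expr1n mulr1.
  move=> F; rewrite powersetE => FE.
  rewrite mulrCA -exprS; congr (_ * _ ^+ _).
  have := subset_leq_card FE; rewrite [#|E|](cardsD1 e) eE /=.
  by move=> H; rewrite add1n subSn.
by move/(congr1 (fun z => z - rho)); rewrite addrK.
Qed.

Theorem corollary1 (R : realType) (n m : nat) :
  (2 <= n)%N -> (1 <= m <= 'C(n, 2))%N ->
  forall (E : {set {set 'I_n}}) (s t : 'I_n), two_terminal m E s t ->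
    (d_UMRTTG R m 1 E s t <-> [set s; t] \in E).
Proof.
move=> _ /andP [m1 _] E s t tt; have := tt.
case/and3P=> /forall_inP simp /eqP cE st.
split.
  case=> _ H.
  have : (0 < #|E|)%N by rewrite cE.
  case/card_gt0P=> e eE.
  have /cards2P [a [b [ab eab]]] : #|e| == 2%N by apply: simp.
  rewrite eab in eE.
  have tt' : two_terminal m E a b.
    by rewrite /two_terminal cE eqxx ab !andbT; apply/forall_inP.
  have := H E a b tt' 0 (ltac:(by rewrite lexx ler01)).
  rewrite !rel_val // eE.
  by case: ifP => // _; rewrite subr0 ler10.
move=> eE; split => // E' s' t' /and3P [_ _ st'] rho /andP [r0 r1].
rewrite !rel_val // eE; case: ifP => // _.
by rewrite subr_ge0.
Qed.
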